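(* Let $K$ be a field, $S=K[x_1,\ldots,x_n]$, and let $I\subseteq S$ be a squarefree strongly stable ideal generated in degree $d$. Then for all $j\ge0$, \[ \mu_{d+j}(I)=\sum_{i=0}^{n-d}\binom{n-d-i}{j}m_{d+i}(I). \]
   Context: A squarefree monomial ideal $I$ with minimal monomial generating set $G(I)$ is squarefree strongly stable if for every $u\in G(I)$ and all $i<j$ with $x_j\mid u$ and $x_i\nmid u$, one has $x_iu/x_j\in I$. For a monomial $u$, $m(u)=\max\{j: x_j\mid u\}$. $G_i(I)=\{u\in G(I): m(u)=i\}$ and $m_i(I)=|G_i(I)|$. $I_{[j]}$ is the ideal generated by all squarefree monomials of degree $j$ in $I$, and $\mu_j(I)$ is the number of minimal monomial generators of $I_{[j]}$ (i.e., the number of squarefree monomials of degree $j$ in $I$). Binomial coefficients $\binom{a}{b}$ with $b>a\ge0$ are $0$. *)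

(* Defs.v *)
From mathcomp Require Import all_boot.
Set Implicit Arguments. Unset Strict Implicit. Unset Printing Implicit Defensive.

(* Encoding: the variables x_1,...,x_n of S = K[x_1..x_n] are indexed by
   k : 'I_n, with x_(k+1) <-> k.  A squarefree monomial is identified with
   its support, a set u : {set 'I_n}; deg u = #|u|.  A squarefree monomial
   ideal I is given by its minimal monomial generating set G = G(I).
   (When all generators have the same degree d, G is automatically an
   antichain, hence the minimal generating set of the ideal it generates.) *)

Section SqfIdeals.
Variable n : nat.

Definition inI (G : {set {set 'I_n}}) (u : {set 'I_n}) : bool :=
  [exists g in G, g \subset u].

(* m(u) = max { j : x_j | u }  (1-based index; m(1) = 0) *)
Definition mmax (u : {set 'I_n}) : nat := \max_(k in u) (val k).+1.

Definition sqf_strongly_stable (G : {set {set 'I_n}}) : Prop :=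
  forall u, u \in G -> forall i j : 'I_n, (val i < val j)%N ->
    j \in u -> i \notin u -> inI G (i |: (u :\ j)).

Definition m_ (G : {set {set 'I_n}}) (i : nat) : nat :=
  #|[set u in G | mmax u == i]|.

Definition mu (G : {set {set 'I_n}}) (j : nat) : nat :=
  #|[set u : {set 'I_n} | (#|u| == j) && inI G u]|.

End SqfIdeals.

(* Main.v *)
Require Import Defs.
From mathcomp Require Import all_boot.
From mathcomp Require Import zify.
Set Implicit Arguments. Unset Strict Implicit. Unset Printing Implicit Defensive.

Section Aux.
Variable n : nat.
Implicit Types (u v w g : {set 'I_n}) (k : 'I_n).

Definition Aset u := [set k : 'I_n | mmax u <= val k].
Definition Pb u w := (u \subset w) && (w :\: u \subset Aset u).

Lemma mmax_lt u k : k \in u -> val k < mmax u.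
Proof. move=> ku; rewrite /mmax. exact: (@leq_bigmax_cond _ (fun k => k \in u) (fun k : 'I_n => (val k).+1) k ku). Qed.

Lemma mmax_le_n u : mmax u <= n.
Proof. apply/bigmax_leqP => k _; exact: ltn_ord. Qed.

Lemma card_le_mmax u : #|u| <= mmax u.
Proof.
case Em: (mmax u) => [|p].
  case: (set_0Vmem u) => [->|[k ku]]; first by rewrite cards0.
  by have := mmax_lt ku; rewrite Em.
have inj : {in u &, injective (fun k : 'I_n => (inord (val k) : 'I_p.+1))}.
  move=> a b au bu /(congr1 val) /=.
  have ha := mmax_lt au; have hb := mmax_lt bu; rewrite Em in ha hb.
  by rewrite !inordK // => /val_inj.
rewrite -(card_in_imset inj).
by apply: leq_trans (max_card _) _; rewrite card_ord.
Qed.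

Lemma card_ord_ge m : m <= n -> #|[set k : 'I_n | m <= val k]| = n - m.
Proof.
move=> mn.
rewrite -sum1_card big_mkcond /=.
transitivity (\sum_(k < n) ((m <= k) : nat)).
  by apply: eq_bigr => k _; rewrite inE; case: (m <= k).
rewrite -(big_mkord xpredT (fun i : nat => ((m <= i) : nat))).
rewrite (@big_cat_nat _ _ _ m 0 n) //=.
rewrite big_nat_cond big1 ?add0n; last by move=> i /andP[/andP[_ h] _]; rewrite leqNgt h.
rewrite big_nat_cond (eq_bigr (fun _ => 1)); last by move=> i /andP[/andP[h _] _]; rewrite h.
by rewrite -big_nat_cond sum_nat_const_nat muln1.
Qed.

Lemma card_Aset u : #|Aset u| = n - mmax u.
Proof. exact: card_ord_ge (mmax_le_n u). Qed.

Lemma Aset_notin u v k : v \subset Aset u -> k \in v -> k \notin u.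
Proof.
move=> /subsetP vA kv; apply/negP => ku.
by have := vA _ kv; rewrite inE leqNgt mmax_lt.
Qed.

Lemma UD_eq u v : v \subset Aset u -> (u :|: v) :\: u = v.
Proof.
move=> vA; apply/setP => k; rewrite !inE.
case kv: (k \in v); last by rewrite orbF andNb.
by rewrite orbT andbT (Aset_notin vA kv).
Qed.

Lemma count_u u j :
  #|[set w : {set 'I_n} | (#|w| == #|u| + j) && Pb u w]| = 'C(n - mmax u, j).
Proof.
rewrite -card_Aset -cards_draws.
have inj : {in [set v : {set 'I_n} | v \subset Aset u & #|v| == j] &, injective (fun v : {set 'I_n} => u :|: v)}.
  move=> a b; rewrite !inE => /andP[aA _] /andP[bA _] e.
  by rewrite -(UD_eq aA) e UD_eq.
rewrite -(card_in_imset inj); apply: eq_card => w.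
apply/idP/idP.
  rewrite inE => /andP[/eqP cw /andP[uw wA]].
  apply/imsetP; exists (w :\: u).
    rewrite inE wA /=; rewrite cardsD (setIidPr uw) cw; apply/eqP; lia.
  by rewrite -{1}(setID w u) (setIidPr uw).
case/imsetP => v; rewrite inE => /andP[vA /eqP cv] ->.
have dj : u :&: v = set0.
  apply/setP => k; rewrite !inE; apply/negP => /andP[ku kv].
  by have := Aset_notin vA kv; rewrite ku.
rewrite inE /Pb subsetUl /= cardsU dj cards0 cv subn0 eqxx /= UD_eq //.
Qed.

Lemma sum_sub (A B : {set 'I_n}) (f : 'I_n -> nat) :
  A \subset B -> \sum_(k in A) f k <= \sum_(k in B) f k.
Proof.
move=> sAB; rewrite [X in _ <= X](@big_setID _ _ _ _ B A) /= (setIidPr sAB).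
exact: leq_addr.
Qed.

Lemma card_sum (P : pred {set 'I_n}) :
  #|[set w : {set 'I_n} | P w]| = \sum_(w : {set 'I_n}) (P w : nat).
Proof.
rewrite -sum1_card big_mkcond /=; apply: eq_bigr => w _; rewrite inE.
by case: (P w).
Qed.

Lemma exists_bottom (G : {set {set 'I_n}}) :
  sqf_strongly_stable G -> forall w, inI G w -> exists2 u, u \in G & Pb u w.
Proof.
move=> SS w /existsP [g0 /andP [g0G g0w]].
pose s (g : {set 'I_n}) := \sum_(k in g) val k.
have H0 : (g0 \in G) && (g0 \subset w) by rewrite g0G g0w.
case: (@arg_minnP _ g0 (fun g => (g \in G) && (g \subset w)) s H0) => u /andP[uG uw] umin.
exists u => //; rewrite /Pb uw /=.
apply/subsetP => x /setDP [xw xnu]; rewrite inE leqNgt; apply/negP => xlt.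
have [y yu xy] : exists2 y, y \in u & val x <= val y.
  apply/exists_inP; apply: contraT; rewrite negb_exists_in => /forall_inP H.
  have : mmax u <= val x.
    by apply/bigmax_leqP => k ku; have := H k ku; rewrite -ltnNge.
  by rewrite leqNgt xlt.
have xy' : val x < val y.
  rewrite ltn_neqAle xy andbT; apply/negP => /eqP /val_inj exy.
  by rewrite exy yu in xnu.
case/existsP: (SS u uG x y xy' yu xnu) => g' /andP[g'G g'sub].
have g'w : g' \subset w.
  apply: subset_trans g'sub _; apply/subsetP => k; rewrite !inE.
  by case/orP => [/eqP->//|/andP[_ ku]]; exact: (subsetP uw).
have h1 := umin g' (introT andP (conj g'G g'w)).
have h2 := sum_sub (fun k => val k) g'sub.
have h3 : s (x |: (u :\ y)) = val x + s (u :\ y).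
  by rewrite /s big_setU1 // !inE (negbTE xnu) andbF.
have h4 : s u = val y + s (u :\ y) by rewrite /s (big_setD1 y).
rewrite /s in h1 h3 h4; rewrite h3 in h2; rewrite h4 in h1; by have := leq_trans h1 h2; rewrite leq_add2r leqNgt xy'.
Qed.

Lemma uniq_bottom d u1 u2 w :
  #|u1| = d -> #|u2| = d -> Pb u1 w -> Pb u2 w -> u1 = u2.
Proof.
move=> c1 c2 /andP[uw1 wA1] /andP[uw2 wA2].
apply/eqP; apply: contraT => ne.
have [x] : exists x, x \in u1 :\: u2.
  apply/set0Pn; rewrite setD_eq0; apply: contra ne => s12.
  by rewrite eqEcard s12 c1 c2 leqnn.
have [y] : exists y, y \in u2 :\: u1.
  apply/set0Pn; rewrite setD_eq0; apply: contra ne => s21.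
  by rewrite eq_sym eqEcard s21 c1 c2 leqnn.
rewrite !inE => /andP[yn1 yu2] /andP[xn2 xu1].
have hx : x \in w :\: u2 by rewrite inE xn2 (subsetP uw1).
have hy : y \in w :\: u1 by rewrite inE yn1 (subsetP uw2).
have := subsetP wA2 _ hx; have := subsetP wA1 _ hy; rewrite !inE => a b.
have := mmax_lt xu1; have := mmax_lt yu2; lia.
Qed.

Lemma per_w (G : {set {set 'I_n}}) d j :
  (forall u, u \in G -> #|u| = d) -> sqf_strongly_stable G -> forall w,
  \sum_(u in G) (((#|w| == d + j) && Pb u w) : nat) = (((#|w| == d + j) && inI G w) : nat).
Proof.
move=> hd SS w.
case iw: (inI G w); last first.
  rewrite andbF; apply: big1 => u uG.
  case P: (Pb u w); rewrite ?andbF //.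
  move: iw => /negbT /negP []; apply/existsP; exists u; rewrite uG.
  by case/andP: P.
have [u0 u0G P0] := exists_bottom SS iw.
rewrite (bigD1 u0) //= P0 big1 ?addn0 ?andbT //.
move=> u /andP[uG ne]; case P: (Pb u w); rewrite ?andbF //.
by move: ne; rewrite (uniq_bottom (hd _ uG) (hd _ u0G) P P0) eqxx.
Qed.

End Aux.

Theorem lemma4p1 (n d : nat) (G : {set {set 'I_n}}) :
  (forall u, u \in G -> #|u| = d) ->
  sqf_strongly_stable G ->
  forall j : nat,
    mu G (d + j) = \sum_(0 <= i < (n - d).+1) 'C(n - d - i, j) * m_ G (d + i).
Proof.
move=> hd SS j.
have step1 : mu G (d + j) = \sum_(u in G) 'C(n - mmax u, j).
  rewrite /mu card_sum.
  rewrite (eq_bigr (fun w : {set 'I_n} => \sum_(u in G) (((#|w| == d + j) && Pb u w) : nat)));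
    last by move=> w _; rewrite (@per_w n G d j hd SS).
  rewrite exchange_big /=; apply: eq_bigr => u uG.
  by rewrite -count_u card_sum (hd _ uG).
rewrite step1.
have mE : forall i, m_ G (d + i) = \sum_(u in G) ((mmax u == d + i) : nat).
  move=> i; rewrite /m_ -sum1_card big_mkcond [RHS]big_mkcond /=.
  by apply: eq_bigr => u _; rewrite inE; case: (u \in G); case: (mmax u == d + i).
rewrite (eq_bigr (fun i => \sum_(u in G) 'C(n - d - i, j) * (mmax u == d + i)));
  last by move=> i _; rewrite mE big_distrr.
rewrite exchange_big /=; apply: eq_bigr => u uG.
have hl := card_le_mmax u; have hu := mmax_le_n u; rewrite hd // in hl.
rewrite (eq_bigr (fun i => if i == mmax u - d then 'C(n - d - i, j) else 0)); last first.
  move=> i _; have -> : (mmax u == d + i) = (i == mmax u - d) by apply/eqP/eqP; lia.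
  by case: (i == mmax u - d); rewrite ?muln1 ?muln0.
rewrite -big_mkcond big_nat1_eq.
have -> : (0 <= mmax u - d < (n - d).+1) = true by apply/andP; split; lia.
congr 'C(_, _); lia.
Qed.
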